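(* Let $q\ge 2$ be a prime power, $m\ge 1$, $n=q^m-1$, and suppose $n=r_1r_2$ with integers $r_1,r_2>1$ and $\gcd(r_1,r_2)=1$. Let $a$ be the multiplicative order of $q$ modulo $r_1$; then $a\mid m$. Fix a generator $\alpha$ of the multiplicative group $\mathbb{F}_{q^m}^*$ and a group isomorphism $T:\mathbb{Z}_n\to\mathbb{Z}_{r_1}\times\mathbb{Z}_{r_2}$. Let $$\Gamma=\left\{(i_1,i_2)\in\mathbb{Z}_{r_1}\times\mathbb{Z}_{r_2}\ \middle|\ 0\le i_1<a,\ 0\le i_2<\frac{m}{a}\right\}.$$ Then $T^{-1}(\Gamma)\subseteq\mathbb{Z}_n$ is a set of check positions for the punctured code $R^*_q(m(q-1)-2,m)$; that is, the set of coordinates $\{\alpha^i\mid i\in T^{-1}(\Gamma)\}$ is a set of check positions of $R^*_q(m(q-1)-2,m)$.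
   Context: $\mathbb{F}=\mathbb{F}_q$. Elements of $\mathbb{Z}_r$ are identified with the integers $0,\dots,r-1$. For a natural number $k$ with $q$-ary expansion $k=\sum_{r\ge0}k_rq^r$, $k_r\in\{0,\dots,q-1\}$, its $q$-weight is $\mathrm{wt}_q(k)=\sum_r k_r$. Let $G$ be the additive group of $\mathbb{F}_{q^m}$; a word of length $q^m$ is a vector $(c_g)_{g\in G}\in\mathbb{F}^G$, written $bX^0+\sum_{i=0}^{n-1}a_iX^{\alpha^i}$ (coordinate $0$ has entry $b$, coordinate $\alpha^i$ has entry $a_i$). For $0<\rho\le m(q-1)$, the generalized Reed–Muller code $R_q(\rho,m)$ is the set of words $bX^0+\sum_i a_iX^{\alpha^i}$ such that $b\cdot 0^s+\sum_{i=0}^{n-1}a_i\alpha^{is}=0$ for every integer $s$ with $0\le s<q^m-1$ and $\mathrm{wt}_q(s)<m(q-1)-\rho$ (convention $0^0=1$). The punctured code $R^*_q(\rho,m)$ is obtained from $R_q(\rho,m)$ by deleting the coordinate $X^0$; its coordinates are $\alpha^0,\dots,\alpha^{n-1}$, indexed by $i\in\mathbb{Z}_n$. For a linear code $C$ of dimension $k$ with coordinate set $P$, an information set is $I\subseteq P$ with $|I|=k$ such that the projection of $C$ onto the coordinates in $I$ is all of $\mathbb{F}^{k}$; a set of check positions is the complement $P\setminus I$ of an information set. *)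

(* Defs.v *)
From HB Require Import structures.
From mathcomp Require Import all_boot all_order all_algebra all_field.
Set Implicit Arguments. Unset Strict Implicit. Unset Printing Implicit Defensive.
Import GRing.Theory.
Local Open Scope ring_scope.

(* q-ary weight (digit sum) of k: sum of the base-q digits k_r = (k / q^r) mod q.
   For q >= 2, q^r > k for r > k, so digits r <= k suffice. *)
Definition wt_q (q k : nat) : nat := (\sum_(r < k.+1) (k %/ q ^ r %% q))%N.

(* Words of length q^m: coordinate X^0 carries b, coordinate alpha^i carries a i,
   for i in Z_n, n = q^m - 1.  F = F_q is embedded in K = F_{q^m} via f.
   (b, a) is in R_q(rho, m) iff for every 0 <= s < q^m - 1 with
   wt_q(s) < m(q-1) - rho:  b * 0^s + sum_i a_i alpha^(i s) = 0  (0^0 = 1). *)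
Definition RM_word (F K : fieldType) (f : {rmorphism F -> K}) (alpha : K)
    (q m rho : nat) (b : F) (a : {ffun 'Z_(q ^ m - 1) -> F^o}) : bool :=
  [forall s : 'I_(q ^ m - 1),
     (wt_q q s < m * (q - 1) - rho)%N ==>
     (f b * 0 ^+ s + \sum_(i : 'Z_(q ^ m - 1)) f (a i) * alpha ^+ (i * s)%N == 0)].

(* The punctured code R*_q(rho, m): delete coordinate X^0, i.e. the projection
   {a | exists b, (b, a) in R_q(rho, m)}; as a subspace of F^(Z_n) it is the
   span of this (already linear) set. *)
Definition punctured_RM (F K : finFieldType) (f : {rmorphism F -> K}) (alpha : K)
    (q m rho : nat) : {vspace {ffun 'Z_(q ^ m - 1) -> F^o}} :=
  <<[seq a <- enum {: {ffun 'Z_(q ^ m - 1) -> F^o}}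
        | [exists b : F, @RM_word F K f alpha q m rho b a]]>>%VS.

Definition information_set (F : fieldType) (I : finType)
    (C : {vspace {ffun I -> F^o}}) (S : {set I}) : Prop :=
  #|S| = \dim C /\
  forall y : {ffun I -> F^o}, exists2 c, c \in C & forall i, i \in S -> c i = y i.

Definition check_positions (F : fieldType) (I : finType)
    (C : {vspace {ffun I -> F^o}}) (J : {set I}) : Prop :=
  information_set C (~: J).

(* Main.v *)
Require Import Defs.
From HB Require Import structures.
From mathcomp Require Import all_boot all_order all_algebra all_field all_solvable.
From mathcomp Require Import zify.

Lemma bern (Q e : nat) : (0 < Q)%N -> ((Q - 1) * e + 1 <= Q ^ e)%N.
Proof.
move=> Q0; elim: e => [|e IH]; first by rewrite muln0 expn0.
rewrite expnS; nia.
Qed.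

Lemma ord_dvd (q r a m : nat) : 0 < a -> q ^ a = 1 %[mod r] ->
  (forall b, 0 < b -> q ^ b = 1 %[mod r] -> a <= b) -> q ^ m = 1 %[mod r] -> a %| m.
Proof.
move=> a0 qa amin qm.
have h : q ^ (m %% a) = 1 %[mod r].
  move: qm; rewrite {1}(divn_eq m a) mulnC expnD expnM => qm.
  by rewrite -modnMml -modnXm qa modnXm exp1n modnMml mul1n in qm.
rewrite /dvdn; apply/negPn/negP => nz; rewrite -lt0n in nz.
by have := amin _ nz h; rewrite leqNgt ltn_mod a0.
Qed.

Lemma totient_le n : totient n <= n.
Proof.
rewrite totient_count_coprime.
apply: (@leq_trans (\sum_(0 <= d < n) 1)); first by apply: leq_sum => i _; case: coprime.
by rewrite sum_nat_const_nat subn0 muln1.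
Qed.

Lemma nt_main (q m r1 r2 a : nat) : 1 < q -> 0 < m -> q ^ m - 1 = r1 * r2 ->
  1 < r1 -> 1 < r2 -> 0 < a -> q ^ a = 1 %[mod r1] ->
  (forall b, 0 < b -> q ^ b = 1 %[mod r1] -> a <= b) ->
  [/\ q ^ m = 1 %[mod r1], a %| m, a <= r1 & m %/ a <= r2].
Proof.
move=> q1 m0 nr r1g r2g a0 qa amin.
have qm1 : 0 < q ^ m by rewrite expn_gt0 ltnW.
have qm : q ^ m = 1 %[mod r1].
  by rewrite -(subnK qm1) nr mulnC -modnDml modnMl.
have adm := @ord_dvd q r1 a m a0 qa amin qm.
split => //.
  have cop : coprime q r1.
    by rewrite -(coprime_pexpl _ _ m0) -coprime_modl qm modn_small // coprime1n.
  apply: leq_trans (totient_le r1).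
  by apply: amin; [rewrite totient_gt0 ltnW | exact: Euler_exp_totient].
have qa1 : 0 < q ^ a by rewrite expn_gt0 ltnW.
have r1le : r1 <= q ^ a - 1.
  apply: dvdn_leq; first by rewrite subn_gt0 -{1}(expn0 q) ltn_exp2l.
  by rewrite -eqn_mod_dvd // qa modn_small.
have := @bern (q ^ a) (m %/ a) qa1; rewrite -expnM (mulnC a) divnK // => hb.
rewrite -(leq_pmul2l (ltnW r1g)) -nr.
apply: leq_trans (leq_mul r1le (leqnn _)) _.
lia.
Qed.

Import GRing.Theory.
Local Open Scope ring_scope.


Lemma sum_frob (R : comNzRingType) (N : nat) I (r : seq I) (P : pred I) (F : I -> R) :
  [pchar R].-nat N -> (\sum_(i <- r | P i) F i) ^+ N = \sum_(i <- r | P i) F i ^+ N.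
Proof.
move=> hN; have N0 : (0 < N)%N by case/andP: hN.
apply: (big_morph (fun x : R => x ^+ N)).
  by move=> x y; rewrite exprDn_pchar.
by rewrite expr0n; case: N N0 {hN}.
Qed.

Lemma fix_adjoin (F0 : fieldType) (L : fieldExtType F0) (N : nat)
   (K0 : {subfield L}) (y : L) : [pchar L].-nat N ->
  (forall c, c \in K0 -> c ^+ N = c) -> y ^+ N = y ->
  forall z, z \in <<K0; y>>%VS -> z ^+ N = z.
Proof.
move=> hN hK hy z zin.
rewrite -(Fadjoin_poly_eq zin).
have PO := Fadjoin_polyOver K0 y z.
rewrite horner_coef sum_frob //; apply: eq_bigr => i _.
rewrite exprMn (hK _ (polyOverP PO i)) -exprM mulnC exprM hy //.
Qed.

Lemma card_fix (R : finFieldType) (S : {pred R}) (N : nat) : (1 < N)%N ->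
  (forall x, x \in S -> x ^+ N = x) -> (#|S| <= N)%N.
Proof.
move=> N1 hS.
have P0 : size ('X^N - 'X : {poly R}) = N.+1.
  by rewrite size_polyDl ?size_polyXn // size_polyN size_polyX.
have := @max_poly_roots _ ('X^N - 'X) (enum S).
rewrite -size_poly_eq0 P0 cardE -ltnS; apply => //; last exact: enum_uniq.
apply/allP => x; rewrite mem_enum => /hS hx.
by rewrite /root !hornerE hx subrr.
Qed.

Lemma fix_adjoin_seq (F0 : fieldType) (L : fieldExtType F0) (N : nat) (xs : seq L) :
  forall K0 : {subfield L}, [pchar L].-nat N ->
  (forall c, c \in K0 -> c ^+ N = c) -> (forall x, x \in xs -> x ^+ N = x) ->
  forall z, z \in <<K0 & xs>>%VS -> z ^+ N = z.
Proof.
elim: xs => [|x xs IH] K0 hN hK hx z.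
  by rewrite Fadjoin_nil; apply: hK.
rewrite adjoin_cons => zin.
apply: (IH <<K0; x>>%AS hN _ _ z zin).
  move=> c cin; apply: (@fix_adjoin _ _ _ K0 x hN hK _ c cin); apply: hx; exact: mem_head.
by move=> y yin; apply: hx; rewrite inE yin orbT.
Qed.

Lemma pow_fix (R : nzRingType) (c : R) (p k : nat) : c ^+ p = c -> c ^+ (p ^ k) = c.
Proof.
move=> h; elim: k => [|k IH]; first by rewrite expn0 expr1.
by rewrite expnSr exprM IH h.
Qed.

Lemma field_ind (F K : finFieldType) (f : {rmorphism F -> K}) (q m a e : nat) (b g : K) :
  #|F| = q -> #|K| = (q ^ m)%N -> (a * e)%N = m -> (0 < a)%N ->
  b ^+ (q ^ a) = b ->
  (forall d, (0 < d)%N -> b ^+ (q ^ d) = b -> (a <= d)%N) ->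
  (forall x : K, x != 0 -> exists u v, x = b ^+ u * g ^+ v) ->
  forall c : nat -> nat -> F,
  \sum_(u < a) \sum_(v < e) f (c u v) * (b ^+ u * g ^+ v) = 0 ->
  forall u v, (u < a)%N -> (v < e)%N -> c u v = 0.
Proof.
move=> cF cK ae a0 hup hlow hgen c hsum.
have [p pr_p pcK] := finPcharP K.
pose L := pPrimeCharType pcK.
have pcL : p \in [pchar L] := pcK.
have q1 : (1 < q)%N by rewrite -cF; exact: finNzRing_gt1.
have [k qk] : exists k, q = (p ^ k)%N.
  have pcF : p \in [pchar F] by rewrite -(fmorph_pchar f).
  exists (logn p #|pPrimeCharType pcF|); rewrite -cF.
  exact: (card_pprimeChar pcF).
have natq : forall t, [pchar L].-nat (q ^ t)%N.
  by move=> t; rewrite (eq_pnat _ (pcharf_eq pcL)) qk -expnM pnatX pnat_id.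
have natq1 : [pchar L].-nat q by have := natq 1%N; rewrite expn1.
have cardFp : #|'F_p| = p := card_Fp pr_p.
pose Fq : {subfield L} := <<1 & [seq (f x : L) | x <- enum F]>>%AS.
have fFq : forall x, (f x : L) \in Fq.
  by move=> x; apply: seqv_sub_adjoin; apply/mapP; exists x; rewrite ?mem_enum.
have fix1 : forall c0 : L, c0 \in (1%AS : {subfield L}) -> c0 ^+ q = c0.
  move=> c0; rewrite Fermat's_little_theorem dimv1 cardFp expn1 => /eqP h.
  rewrite qk; exact: pow_fix.
have fixFq : forall c0 : L, c0 \in Fq -> c0 ^+ q = c0.
  apply: (@fix_adjoin_seq _ L q _ 1%AS natq1 fix1) => x0 /mapP [y _ ->].
  change (@GRing.exp K (f y) q = f y).
  by rewrite -rmorphXn -cF expf_card.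
have cardFq : #|Fq| = q.
  apply/eqP; rewrite eqn_leq; apply/andP; split.
    exact: (@card_fix L Fq q q1 fixFq).
  have finj : injective (fun x => (f x : L)) := fmorph_inj f.
  rewrite -{1}cF -(card_imset _ finj); apply: subset_leq_card.
  by apply/subsetP => x0 /imsetP [y _ ->]; apply: fFq.
have D0 : (p ^ \dim Fq)%N = q by rewrite -cardFq card_vspace cardFp.
have fixFqt : forall t (c0 : L), c0 \in Fq -> c0 ^+ (q ^ t) = c0.
  by move=> t c0 h; apply: pow_fix; apply: fixFq.
pose E1 : {subfield L} := <<Fq; (b : L)>>%AS.
have dimE1 : \dim E1 = (adjoin_degree Fq b * \dim Fq)%N := dim_Fadjoin Fq b.
have cardE1 : #|E1| = (q ^ adjoin_degree Fq b)%N.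
  by rewrite card_vspace cardFp dimE1 mulnC expnM D0.
have bE1 : (b : L) \in E1 := memv_adjoin Fq b.
have d1a : adjoin_degree Fq b = a.
  apply/eqP; rewrite eqn_leq; apply/andP; split.
    rewrite -(leq_exp2l _ _ q1) -cardE1; apply: card_fix.
      by rewrite -{1}(expn0 q) ltn_exp2l.
    exact: (@fix_adjoin _ L _ Fq b (natq a) (fixFqt a) hup).
  apply: hlow; first by rewrite /adjoin_degree.
  move: bE1; rewrite Fermat's_little_theorem cardFp dimE1 mulnC expnM D0.
  by move/eqP.
pose E2 : {subfield L} := <<E1; (g : L)>>%AS.
have E2full : forall x : L, x \in E2.
  move=> x; have [->|x0] := eqVneq x 0; first exact: mem0v.
  have [u [v ->]] := hgen x x0.
  apply: rpredM; last exact: rpredX (memv_adjoin E1 g).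
  by apply: rpredX; apply: (subvP (subv_adjoin E1 g)).
have d2e : adjoin_degree E1 g = e.
  have E2f : (E2 : {vspace L}) = fullv by apply/vspaceP => x; rewrite memvf E2full.
  have : (p ^ \dim E2)%N = (q ^ m)%N.
    by rewrite -{1}cardFp -card_vspace E2f card_vspacef -cK.
  rewrite (dim_Fadjoin E1 g) dimE1 d1a mulnA mulnC expnM D0 => /(expnI q1).
  by rewrite -ae mulnC => /eqP; rewrite eqn_pmul2l // => /eqP.
move=> u v ua ve.
pose dv (v : nat) : L := \sum_(u < a) (f (c u v) : L) * (b : L) ^+ u.
have hsumL : \sum_(v < e) dv v * (g : L) ^+ v = 0.
  rewrite /dv; under eq_bigr => v' _ do rewrite mulr_suml.
  rewrite exchange_big /=.
  apply: etrans _ hsum; apply: eq_bigr => u' _; apply: eq_bigr => v' _.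
  by rewrite mulrA.
have PO : (\poly_(v' < e) dv v') \is a polyOver E1.
  apply/polyOverP => i; rewrite coef_poly; case: ifP => _; last exact: mem0v.
  apply: rpred_sum => u' _; apply: rpredM; last exact: rpredX.
  by apply: (subvP (subv_adjoin Fq b)); apply: fFq.
have root1 : root (\poly_(v' < e) dv v') g by rewrite /root horner_poly hsumL.
have P0 : \poly_(v' < e) dv v' = 0.
  apply/eqP; apply: contraT => nz.
  have := dvdp_leq nz (minPoly_dvdp PO root1).
  rewrite size_minPoly d2e => h; have := leq_trans h (size_poly e dv).
  by rewrite ltnn.
have dv0 : dv v = 0.
  by have := congr1 (fun P : {poly L} => P`_v) P0; rewrite coef_poly ve coef0.
have QO : (\poly_(u' < a) (f (c u' v) : L)) \is a polyOver Fq.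
  apply/polyOverP => i; rewrite coef_poly; case: ifP => _; last exact: mem0v.
  exact: fFq.
have root2 : root (\poly_(u' < a) (f (c u' v) : L)) b.
  by rewrite /root horner_poly -/(dv v) dv0.
have Q0 : \poly_(u' < a) (f (c u' v) : L) = 0.
  apply/eqP; apply: contraT => nz.
  have := dvdp_leq nz (minPoly_dvdp QO root2).
  rewrite size_minPoly d1a => h; have := leq_trans h (size_poly _ _).
  by rewrite ltnn.
have := congr1 (fun P : {poly L} => P`_u) Q0; rewrite coef_poly ua coef0.
move=> h; apply/eqP; rewrite -(fmorph_eq0 f); apply/eqP; exact: h.
Qed.

Lemma alpha_n1 (K : finFieldType) (alpha : K) : alpha != 0 -> alpha ^+ (#|K| - 1) = 1.
Proof.
move=> a0.
have e : #|K| = (#|K| - 1).+1 by rewrite subn1 prednK //; apply: leq_trans (finNzRing_gt1 K).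
move: (expf_card alpha); rewrite {1}e exprS -[RHS](mulr1 alpha) => h; exact: (mulfI a0 h).
Qed.

Lemma alpha_order (K : finFieldType) (alpha : K) : alpha != 0 ->
  (forall x, x != 0 -> exists i, x = alpha ^+ i) ->
  forall j, (alpha ^+ j == 1) = ((#|K| - 1) %| j)%N.
Proof.
move=> a0 gen j; have h1 := @alpha_n1 K alpha a0.
apply/idP/idP; last first.
  by case/dvdnP => k ->; rewrite mulnC exprM h1 expr1n.
move=> /eqP aj; set n := (#|K| - 1)%N in h1 *.
have n0 : (0 < n)%N.
  rewrite /n subn_gt0; apply: (leq_trans _ (finNzRing_gt1 K)); done.
have ar : alpha ^+ (j %% n) = 1 by rewrite (expr_mod j h1) aj.
rewrite /dvdn; apply/negPn/negP => r0; rewrite -lt0n in r0.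
have : (#|[set~ (0%R : K)]| <= j %% n)%N.
  apply: (@leq_trans #|[set alpha ^+ (nat_of_ord i) | i : 'I_(j %% n)]|); last first.
    by apply: leq_trans (leq_imset_card _ _) _; rewrite card_ord.
  apply: subset_leq_card; apply/subsetP => x; rewrite !inE => /gen [i ->].
  apply/imsetP; exists (Ordinal (ltn_pmod i r0)) => //=.
  by rewrite expr_mod.
rewrite cardsC1 -subn1 -/n leqNgt ltn_pmod //.
Qed.

Definition ds (q B s : nat) : nat := (\sum_(r < B) (s %/ q ^ r %% q))%N.

Lemma ds_rec q B s : ds q B.+1 s = (s %% q + ds q B (s %/ q))%N.
Proof.
rewrite /ds big_ord_recl /= expn0 divn1; congr (_ + _)%N.
by apply: eq_bigr => r _; rewrite /bump /= add1n expnS divnMA.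
Qed.

Lemma ds0 q B t : (1 < q)%N -> (t < q ^ B)%N -> ds q B t = 0%N -> t = 0%N.
Proof.
move=> q1; elim: B t => [|B IH] t; first by rewrite expn0 ltnS leqn0 => /eqP.
rewrite ds_rec => tB /eqP; rewrite addn_eq0 => /andP [/eqP tq /eqP hd].
have t0 : (t %/ q = 0)%N.
  by apply: IH hd; rewrite ltn_divLR ?(ltnW q1) // -expnSr.
by rewrite (divn_eq t q) t0 tq.
Qed.

Lemma ds1 q B s : (1 < q)%N -> (0 < s)%N -> (s < q ^ B)%N -> (ds q B s <= 1)%N ->
  exists j, s = (q ^ j)%N.
Proof.
move=> q1; elim: B s => [|B IH] s s0; first by rewrite expn0 ltnS leqn0 => /eqP s00; rewrite s00 in s0.
rewrite ds_rec => sB hd.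
have sqB : (s %/ q < q ^ B)%N by rewrite ltn_divLR ?(ltnW q1) // -expnSr.
case sq: (s %% q)%N hd => [|r] hd.
  have sq0 : (0 < s %/ q)%N.
    rewrite lt0n; apply/negP => /eqP h; move: s0; by rewrite (divn_eq s q) h sq.
  have [j hj] := IH _ sq0 sqB hd.
  by exists j.+1; rewrite (divn_eq s q) sq hj addn0 expnSr.
have r0 : r = 0%N by move: hd; rewrite addSn ltnS leqn0 addn_eq0 => /andP [/eqP] .
have hd0 : ds q B (s %/ q) = 0%N by move: hd; rewrite r0 add1n ltnS leqn0 => /eqP.
have h := @ds0 q B _ q1 sqB hd0.
by exists 0%N; rewrite expn0 (divn_eq s q) h sq r0.
Qed.

Lemma wt1 q s : (1 < q)%N -> (0 < s)%N -> (wt_q q s < 2)%N -> exists j, s = (q ^ j)%N.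
Proof.
move=> q1 s0 hw; apply: (@ds1 q s.+1 s q1 s0) => //.
by apply: leq_trans (ltn_expl s q1) _; rewrite leq_exp2l.
Qed.

Lemma wt_1 q : (1 < q)%N -> wt_q q 1 = 1%N.
Proof.
move=> q1; rewrite /wt_q -/(ds q 2 1) ds_rec (modn_small q1) divn_small //.
by rewrite /ds big_ord_recl big_ord0 /= div0n mod0n.
Qed.


Lemma natq_K (F K : finFieldType) (f : {rmorphism F -> K}) :
  forall t, [pchar K].-nat (#|F| ^ t)%N.
Proof.
have [p pr_p pcK] := finPcharP K.
have pcF : p \in [pchar F] by rewrite -(fmorph_pchar f).
have cardF : #|F| = (p ^ logn p #|pPrimeCharType pcF|)%N := card_pprimeChar pcF.
by move=> t; rewrite (eq_pnat _ (pcharf_eq pcK)) cardF -expnM pnatX pnat_id.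
Qed.

Lemma code_mem (F K : finFieldType) (f : {rmorphism F -> K}) (alpha : K) (q m : nat)
  (c : {ffun 'Z_(q ^ m - 1) -> F^o}) :
  #|F| = q -> (1 < q ^ m - 1)%N -> (2 <= m * (q - 1))%N ->
  (c \in punctured_RM f alpha q m (m * (q - 1) - 2)) =
  (\sum_(i : 'Z_(q ^ m - 1)) f (c i) * alpha ^+ i == 0).
Proof.
move=> cF n1 m2.
have q1 : (1 < q)%N by rewrite -cF; exact: finNzRing_gt1.
have hw : forall s, (wt_q q s < m * (q - 1) - (m * (q - 1) - 2))%N = (wt_q q s < 2)%N.
  by move=> s; rewrite subKn.
pose lin (x : {ffun 'Z_(q ^ m - 1) -> F^o}) := \sum_(i : 'Z_(q ^ m - 1)) f (x i) * alpha ^+ i.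
have RMlin : forall b x, @RM_word F K f alpha q m (m * (q - 1) - 2) b x -> lin x = 0.
  move=> b x /forallP /(_ (Ordinal n1)) /implyP; rewrite hw wt_1 // => /(_ isT) /eqP.
  rewrite expr1 mulr0 add0r => <-; apply: eq_bigr => i _; by rewrite muln1.
have linD : forall y1 y2, lin (y1 + y2) = lin y1 + lin y2.
  by move=> y1 y2; rewrite /lin -big_split; apply: eq_bigr => i _; rewrite ffunE rmorphD mulrDl.
have linZ : forall k y, lin (k *: y) = f k * lin y.
  by move=> k y; rewrite /lin mulr_sumr; apply: eq_bigr => i _; rewrite ffunE rmorphM mulrA.
have lin0 : lin 0 = 0.
  by rewrite /lin big1 // => i _; rewrite ffunE rmorph0 mul0r.
rewrite /punctured_RM; apply/idP/idP.
  set X := [seq _ <- _ | _] => cin.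
  have key : forall y, y \in X -> lin y = 0.
    by move=> y; rewrite mem_filter => /andP [/existsP [b hb] _]; apply: (RMlin b).
  have cin' : c \in <<in_tuple X>>%VS by [].
  rewrite (coord_span cin'); apply/eqP.
  apply: (big_ind (fun y => lin y = 0)) => [|y1 y2 h1 h2|i _].
  - exact: lin0.
  - by rewrite linD h1 h2 addr0.
  - by rewrite linZ key ?mulr0 // mem_nth.
move=> /eqP h0; apply: memv_span.
rewrite mem_filter; apply/andP; split; last by rewrite mem_enum memvf.
apply/existsP; exists (- \sum_i c i).
apply/forallP => s; apply/implyP; rewrite hw => hs.
case: (posnP s) => [s0 | spos].
  rewrite s0 expr0 mulr1 (eq_bigr (fun i => f (c i))); last first.
    move=> i _. have -> : (nat_of_ord i * 0 = 0)%N by rewrite muln0.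
    by rewrite expr0 mulr1.
  by rewrite rmorphN rmorph_sum addNr.
rewrite expr0n eqn0Ngt spos /= mulr0 add0r.
have [j sj] := @wt1 q s q1 spos hs; rewrite sj.
have : lin c ^+ (q ^ j) = 0 by rewrite /lin h0 expr0n expn_eq0 (negbTE (lt0n_neq0 (ltnW q1))).
rewrite /lin sum_frob; last by rewrite -cF; apply: natq_K.
move=> h1; apply/eqP; apply: etrans _ h1; apply: eq_bigr => i _.
rewrite exprMn exprM -rmorphXn; congr (f _ * _); symmetry.
apply: (@pow_fix _ (c i) q j); have := expf_card (c i : F); rewrite cF; exact.
Qed.

Theorem mainTheorem1 (F K : finFieldType) (f : {rmorphism F -> K})
    (q m r1 r2 a : nat) (alpha : K)
    (T : 'Z_(q ^ m - 1) -> 'Z_r1 * 'Z_r2) :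
  #|F| = q -> (0 < m)%N -> #|K| = (q ^ m)%N ->
  (q ^ m - 1)%N = (r1 * r2)%N -> (1 < r1)%N -> (1 < r2)%N -> coprime r1 r2 ->
  (* a is the multiplicative order of q modulo r1 *)
  (0 < a)%N -> (q ^ a = 1 %[mod r1])%N ->
  (forall b : nat, (0 < b)%N -> (q ^ b = 1 %[mod r1])%N -> (a <= b)%N) ->
  (* alpha generates the multiplicative group of K *)
  alpha != 0 -> (forall x : K, x != 0 -> exists i : nat, x = alpha ^+ i) ->
  (* T is a group isomorphism Z_n -> Z_r1 x Z_r2 *)
  (forall x y, T (x + y) = T x + T y) -> bijective T ->
  (a %| m)%N /\
  check_positions (punctured_RM f alpha q m (m * (q - 1) - 2))
    [set i | ((T i).1 < a)%N && ((T i).2 < m %/ a)%N].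
Proof.
move=> cF m0 cK nr r1g r2g cop a0 qa amin al0 gen Tadd Tbij.
have q1 : (1 < q)%N by rewrite -cF; exact: finNzRing_gt1.
have [qm adm ar1 er2] := @nt_main q m r1 r2 a q1 m0 nr r1g r2g a0 qa amin.
split => //.
have n1 : (1 < q ^ m - 1)%N.
  by rewrite nr (leq_trans r2g) // leq_pmull // ltnW.
have m2 : (2 <= m * (q - 1))%N.
  apply: contraLR n1; rewrite -!ltnNge => h.
  by have [-> ->] : m = 1%N /\ q = 2 by nia.
have cKn : (#|K| - 1)%N = (q ^ m - 1)%N by rewrite cK.
have alN' : alpha ^+ (Zp_trunc (q ^ m - 1)).+2 = 1.
  by rewrite (Zp_cast n1) -cKn (@alpha_n1 K alpha al0).
have EXPD : forall x y : 'Z_(q ^ m - 1), alpha ^+ (x + y)%R = alpha ^+ x * alpha ^+ y.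
  by move=> x y; rewrite -exprD -[RHS](expr_mod _ alN').
have EXP0 : alpha ^+ (0%R : 'Z_(q ^ m - 1)) = 1 by exact: expr0.
have EXPMn : forall (x : 'Z_(q ^ m - 1)) k, alpha ^+ (x *+ k)%R = (alpha ^+ x) ^+ k.
  move=> x; elim => [|k IH]; first by rewrite mulr0n EXP0 expr0.
  by rewrite mulrSr EXPD IH exprSr.
case: Tbij => Tinv TK KT.
have T0 : T 0 = 0 by apply: (addrI (T 0)); rewrite -Tadd !addr0.
have Tinv0 : Tinv 0 = 0 by rewrite -T0 TK.
have TinvD : forall x y, Tinv (x + y) = Tinv x + Tinv y.
  by move=> x y; apply: (can_inj TK); rewrite Tadd !KT.
have TinvMn : forall x k, Tinv (x *+ k) = Tinv x *+ k.
  by move=> x; elim=> [|k IH]; rewrite ?mulr0n ?Tinv0 // !mulrSr TinvD IH.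
have pairMn : forall (x : 'Z_r1) (y : 'Z_r2) k, (x, y) *+ k = (x *+ k, y *+ k).
  by move=> x y; elim=> [|k IH] //; rewrite !mulrSr IH.
pose h (u v : nat) : 'Z_(q ^ m - 1) := Tinv (u%:R, v%:R).
pose b := alpha ^+ (Tinv (1, 0)); pose g := alpha ^+ (Tinv (0, 1)).
have EXPh : forall u v, alpha ^+ h u v = b ^+ u * g ^+ v.
  move=> u v; rewrite /h; have -> : ((u%:R, v%:R) : 'Z_r1 * 'Z_r2) = (1, 0) *+ u + (0, 1) *+ v.
    by rewrite !pairMn !mul0rn; congr pair; rewrite /= ?addr0 ?add0r.
  by rewrite TinvD !TinvMn EXPD !EXPMn.
have Th : forall u v, T (h u v) = (u%:R, v%:R) by move=> u v; rewrite /h KT.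
have b0 : b != 0 by rewrite expf_neq0.
have bpow : forall t, b ^+ t = alpha ^+ h t 0.
  by move=> t; rewrite EXPh expr0 mulr1.
have br1 : b ^+ r1 = 1.
  rewrite bpow /h pchar_Zp // mulr0n.
  have -> : ((0, 0) : 'Z_r1 * 'Z_r2) = 0 by [].
  by rewrite Tinv0.
have bdvd : forall t, b ^+ t = 1 -> (r1 %| t)%N.
  move=> t; rewrite bpow => /eqP; rewrite (@alpha_order K alpha al0 gen) cKn.
  set z := h t 0 => hz.
  have zl : (z < q ^ m - 1)%N by rewrite -[X in (_ < X)%N](Zp_cast n1); exact: ltn_ord.
  have z0 : z = 0.
    apply: val_inj => /=; case: (posnP z) => [//|zp].
    by move: (dvdn_leq zp hz); rewrite leqNgt zl.
  have := congr1 T z0; rewrite Th T0 => /(congr1 fst) /= /(congr1 val).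
  by rewrite /= val_Zp_nat // => /eqP.
have hup : b ^+ (q ^ a) = b.
  by rewrite -(expr_mod (q ^ a) br1) qa (modn_small r1g) expr1.
have hlow : forall d, (0 < d)%N -> b ^+ (q ^ d) = b -> (a <= d)%N.
  move=> d d0 hd; apply: amin => //.
  have qd1 : (1 <= q ^ d)%N by rewrite expn_gt0 ltnW.
  have : b ^+ (q ^ d - 1) = 1.
    by apply: (mulfI b0); rewrite mulr1 -exprS subn1 prednK.
  by move/bdvd; rewrite -(eqn_mod_dvd _ qd1) => /eqP.
have hgen : forall x, x != 0 -> exists u v, x = b ^+ u * g ^+ v.
  move=> x /gen [i ->].
  pose u := nat_of_ord (T 1).1; pose v := nat_of_ord (T 1).2.
  have h1 : h u v = 1 by rewrite /h /u /v !natr_Zp -surjective_pairing TK.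
  have a1 : alpha = b ^+ u * g ^+ v by rewrite -EXPh h1 /= expr1.
  by exists (u * i)%N, (v * i)%N; rewrite a1 exprMn !exprM.
have ae : (a * (m %/ a))%N = m by rewrite mulnC divnK.
have IND := @field_ind F K f q m a (m %/ a) b g cF cK ae a0 hup hlow hgen.
set J := [set i | _].
have hinj : injective (fun w : 'I_a * 'I_(m %/ a) => h w.1 w.2).
  move=> [u v] [u' v'] /= /(congr1 T); rewrite !Th => [[hu hv]].
  have eu : u = u' :> nat.
    move: (congr1 val hu); rewrite /= !val_Zp_nat // !modn_small //.
      exact: leq_trans (ltn_ord _) ar1.
    exact: leq_trans (ltn_ord _) ar1.
  have ev : v = v' :> nat.
    move: (congr1 val hv); rewrite /= !val_Zp_nat // !modn_small //.
      exact: leq_trans (ltn_ord _) er2.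
    exact: leq_trans (ltn_ord _) er2.
  by congr pair; apply: val_inj.
have hJ : J = [set h w.1 w.2 | w : 'I_a * 'I_(m %/ a)].
  apply/setP => i; rewrite inE; apply/idP/imsetP.
    move=> /andP [ia ie]; exists (Ordinal ia, Ordinal ie) => //=.
    by rewrite /h !natr_Zp -surjective_pairing TK.
  move=> [[u v] _ ->]; rewrite Th /= !val_Zp_nat // !modn_small //.
  - by rewrite !ltn_ord.
  - exact: leq_trans (ltn_ord _) er2.
  - exact: leq_trans (ltn_ord _) ar1.
have cardJ : #|J| = m.
  by rewrite hJ card_imset // card_prod !card_ord.
pose lin (x : {ffun 'Z_(q ^ m - 1) -> F^o}) :=
  \sum_(i : 'Z_(q ^ m - 1)) f (x i) * alpha ^+ i.
have linD : forall y1 y2, lin (y1 + y2) = lin y1 + lin y2.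
  by move=> y1 y2; rewrite /lin -big_split; apply: eq_bigr => i _; rewrite ffunE rmorphD mulrDl.
have linB : forall y1 y2, lin (y1 - y2) = lin y1 - lin y2.
  by move=> y1 y2; apply/eqP; rewrite eq_sym subr_eq -linD subrK.
pose W (D : {set 'Z_(q ^ m - 1)}) :=
  [set x : {ffun 'Z_(q ^ m - 1) -> F^o} | [forall i, (i \notin D) ==> (x i == 0)]].
have inW : forall (D : {set 'Z_(q ^ m - 1)}) (x : {ffun 'Z_(q ^ m - 1) -> F^o}), reflect (forall i, i \notin D -> x i = 0) (x \in W D).
  move=> D x; rewrite inE; apply: (iffP forallP) => H i.
    by move=> iD; move: (H i); rewrite iD => /eqP.
  by apply/implyP => /H ->.
have cardW : forall D : {set 'Z_(q ^ m - 1)}, #|W D| = (q ^ #|D|)%N.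
  move=> D; transitivity (#|[set: F^o]| ^ #|D|)%N; last by rewrite cardsT cF.
  rewrite -(card_pffun_on 0); apply: eq_card => x.
  apply/inW/familyP => H i.
    by case: ifP => iD; rewrite ?inE //; apply/eqP; apply: H; rewrite iD.
  by move=> iD; move: (H i); rewrite (negbTE iD) => /eqP.
have linJ : forall x, x \in W J -> lin x =
    \sum_(u < a) \sum_(v < m %/ a) f (x (h u v)) * (b ^+ u * g ^+ v).
  move=> x /inW xW; rewrite /lin (bigID (mem J)) /= [X in _ + X]big1 ?addr0; last first.
    by move=> i iJ; rewrite xW // rmorph0 mul0r.
  rewrite hJ big_imset /=; last by move=> w1 w2 _ _; apply: hinj.
  rewrite pair_big /=; apply: eq_big => [w|w _]; first by rewrite inE.
  by rewrite EXPh.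
have IND' : forall x, x \in W J -> lin x = 0 -> x = 0.
  move=> x xW hl; have := linJ x xW; rewrite hl => /esym hs.
  have hx := IND (fun u v => x (h u v)) hs.
  apply/ffunP => i; rewrite ffunE.
  case iJ : (i \in J); last by move/inW: xW; apply; rewrite iJ.
  by move: iJ; rewrite hJ => /imsetP [[u v] _ ->]; apply: hx.
have SURJ : forall z : K, exists2 x, x \in W J & lin x = z.
  have linj : {in W J &, injective lin}.
    move=> x y xW yW hxy; apply/eqP; rewrite -subr_eq0; apply/eqP; apply: IND'.
      apply/inW => i iJ; rewrite ffunE.
    by move/inW: xW => xW; move/inW: yW => yW; rewrite ffunE xW ?yW ?subr0.
    by rewrite linB hxy subrr.
  have lin_img : lin @: W J = [set: K].
    by apply/eqP; rewrite eqEcard subsetT cardsT card_in_imset // cardW cardJ cK leqnn.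
  move=> z; have : z \in lin @: W J by rewrite lin_img in_setT.
  by case/imsetP => x xW ->; exists x.
set C := punctured_RM _ _ _ _ _.
have Cmem : forall c, (c \in C) = (lin c == 0).
  by move=> c; rewrite /C code_mem.
pose res (y : {ffun 'Z_(q ^ m - 1) -> F^o}) :=
  [ffun i => if i \in J then 0 else y i] : {ffun 'Z_(q ^ m - 1) -> F^o}.
have ext : forall w : {ffun 'Z_(q ^ m - 1) -> F^o}, (forall i, i \in J -> w i = 0) ->
    exists2 c, c \in C & forall i, i \notin J -> c i = w i.
  move=> w wJ; have [x xW hx] := SURJ (- lin w).
  exists (w + x); first by rewrite Cmem linD hx addrN.
  by move=> i iJ; move/inW: xW => xW; rewrite ffunE xW // addr0.
rewrite /check_positions /information_set; split; last first.
  move=> y; have [c cC hc] : exists2 c, c \in C & forall i, i \notin J -> c i = res y i.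
    by apply: ext => i iJ; rewrite ffunE iJ.
  by exists c => // i; rewrite inE => iJ; rewrite hc // ffunE (negbTE iJ).
have resC : res @: C = W (~: J).
  apply/setP => w; apply/imsetP/inW.
    by move=> [c _ ->] i; rewrite inE negbK => iJ; rewrite ffunE iJ.
  move=> wJ.
  have wJ' : forall i, i \in J -> w i = 0 by move=> i iJ; apply: wJ; rewrite inE negbK.
  have [c cC hc] := ext w wJ'.
  exists c => //; apply/ffunP => i; rewrite ffunE.
  by case: ifP => iJ; [rewrite wJ' | rewrite hc ?iJ].
have resinj : {in C &, injective res}.
  move=> c c' cC c'C hr; apply/eqP; rewrite -subr_eq0; apply/eqP; apply: IND'.
    apply/inW => i iJ; rewrite !ffunE.
    have := congr1 (fun y : {ffun 'Z_(q ^ m - 1) -> F^o} => y i) hr.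
    by rewrite /= !ffunE (negbTE iJ) => ->; rewrite subrr.
  by rewrite linB; move: cC c'C; rewrite !Cmem => /eqP -> /eqP ->; rewrite subrr.
have := card_vspace C.
rewrite -(card_in_imset resinj) resC cardW cF => /expnI -> //.
Qed.
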